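(* For all integers $\ell,k\ge0$, in $U(gl(m|n+1))$, $$\sum_{p=1}^{N}(-1)^{(p)}\big[(\mathcal B^\ell)^p_{\ N},(\mathcal B^k)^N_{\ p}\big]=\sum_{i=0}^{\ell-1}\big(\hat I_i\,\tau_{\ell+k-1-i}-\hat I_{\ell+k-1-i}\,\tau_i\big).$$
   Context: Over $\mathbb{C}$, $N=m+n+1$, parity $(p)=0$ for $1\le p\le m$, $(p)=1$ for $m<p\le N$. $gl(m|n+1)$ has homogeneous basis $E_{pq}$ of parity $(p)+(q)$ with graded bracket $[E_{pq},E_{rs}]=\delta_{qr}E_{ps}-(-1)^{((p)+(q))((r)+(s))}\delta_{ps}E_{rq}$. $\mathcal B^p_{\ q}=(-1)^{(p)}E_{pq}$, with powers $(\mathcal B^k)^p_{\ q}=\sum_r\mathcal B^p_{\ r}(\mathcal B^{k-1})^r_{\ q}$, $(\mathcal B^0)^p_{\ q}=\delta_{pq}$; the entry $(\mathcal B^k)^p_{\ q}$ ($k\ge1$) is homogeneous of parity $(p)+(q)$. $\tau_k=(\mathcal B^k)^N_{\ N}$ (so $\tau_0=1$) and $\hat I_k=\sum_{p=1}^N(-1)^{(p)}(\mathcal B^k)^p_{\ p}$ (so $\hat I_0=m-n-1$), the Casimir elements of $gl(m|n+1)$. The bracket on the left is the graded commutator $[a,b]=ab-(-1)^{|a||b|}ba$ for homogeneous $a,b$. *)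

(* Defs.v *)
From HB Require Import structures.
From mathcomp Require Import all_boot all_order all_algebra.
Set Implicit Arguments. Unset Strict Implicit. Unset Printing Implicit Defensive.
Import GRing.Theory.
Local Open Scope ring_scope.

(* Indices p = 1..N of the paper are the ordinals 'I_N with N = m+n+1,
   shifted by one: ordinal i corresponds to p = i+1.  The special index N
   is ord_max. *)
Notation Nidx m n := (m + n).+1 (only parsing).

(* parity (p): even (false) for the first m indices, odd (true) otherwise *)
Definition par (m N : nat) (p : 'I_N) : bool := (m <= p)%N.

Definition sgn (A : ringType) (b : bool) : A := (-1) ^+ b.

Definition sbr (A : ringType) (pa pb : bool) (a b : A) : A :=
  a * b - sgn A (pa && pb) * (b * a).

Definition gl_super_rel (A : ringType) (m n : nat)
    (E : 'I_(Nidx m n) -> 'I_(Nidx m n) -> A) : Prop :=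
  forall p q r s : 'I_(Nidx m n),
    sbr (par m p (+) par m q) (par m r (+) par m s) (E p q) (E r s)
    = (q == r)%:R * E p s
      - sgn A ((par m p (+) par m q) && (par m r (+) par m s))
        * ((p == s)%:R * E r q).

Definition Bmx (A : ringType) (m N : nat) (E : 'I_N -> 'I_N -> A) : 'M[A]_N :=
  \matrix_(p, q) (sgn A (par m p) * E p q).

Fixpoint Bpow (A : ringType) (m N : nat) (E : 'I_N -> 'I_N -> A) (k : nat)
  : 'M[A]_N :=
  match k with
  | 0 => 1%:M
  | k'.+1 => Bmx m E *m Bpow m E k'
  end.

Definition tau (A : ringType) (m n : nat)
    (E : 'I_(Nidx m n) -> 'I_(Nidx m n) -> A) (k : nat) : A :=
  Bpow m E k ord_max ord_max.

Definition Ihat (A : ringType) (m N : nat) (E : 'I_N -> 'I_N -> A) (k : nat) : A :=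
  \sum_(p < N) sgn A (par m p) * Bpow m E k p p.

(* Main.v *)
Require Import Defs.
From HB Require Import structures.
From mathcomp Require Import all_boot all_order all_algebra.
Import GRing.Theory.
Local Open Scope ring_scope.

Section S.
Variables (A : ringType) (m n : nat).
Local Notation N := (m + n).+1.
Variable E : 'I_N -> 'I_N -> A.
Hypothesis hE : gl_super_rel E.
Local Notation pi := (par m).
Local Notation b := (Bmx m E).
Local Notation X k := (Bpow m E k).
Local Notation e x := (sgn A x).

Lemma sgnD x y : e x * e y = e (x (+) y).
Proof. by case: x; case: y; rewrite /sgn /= ?expr0 ?expr1 ?mulr1 ?mul1r ?mulrNN ?mulr1. Qed.

Lemma sgnC x a : e x * a = a * e x.
Proof. by case: x; rewrite /sgn /= ?expr0 ?expr1 ?mulr1 ?mul1r ?mulN1r ?mulrN1. Qed.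

Lemma XS k r s : X k.+1 r s = \sum_t b r t * X k t s.
Proof. by rewrite /= mxE. Qed.

Lemma X0 r s : X 0 r s = (r == s)%:R.
Proof. by rewrite /= mxE. Qed.

Lemma XSmx k : X k.+1 = X k *m b.
Proof. elim: k => [|k IH]; first by rewrite /= mulmx1 mul1mx.
change (b *m X k.+1 = X k.+1 *m b). by rewrite {1}IH mulmxA. Qed.

Lemma XSr k r s : X k.+1 r s = \sum_t X k r t * b t s.
Proof. by rewrite XSmx mxE. Qed.

Lemma Xadd k l : X (k + l) = X k *m X l.
Proof. elim: k => [|k IH] /=; first by rewrite mul1mx.
by rewrite IH mulmxA. Qed.

Lemma bE p q : b p q = e (pi p) * E p q.
Proof. by rewrite mxE. Qed.

Lemma sum_delta (q : 'I_N) (F : 'I_N -> A) : \sum_t (t == q)%:R * F t = F q.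
Proof.
rewrite (bigD1 q) //= eqxx mul1r big1 ?addr0 // => t /negbTE ->; by rewrite mul0r.
Qed.
Local Notation pp x y := (pi x (+) pi y).

Ltac sgn_bash := rewrite /sgn; repeat match goal with |- context [par ?m ?x] => case: (par m x) end;
  rewrite ?(expr0, expr1, mul1r, mulr1, mulN1r, mulrN1, mulNr, mulrN, opprK, mulrA).

Ltac eq_bash := repeat (rewrite ?eqxx; match goal with |- context [?x == ?y] => let T := type of x in match T with ordinal _ => case: (eqVneq x y) => [?|?]; [subst|] end end).
Ltac cleanup := rewrite ?(mulr1n, mulr0n, mul0r, mulr0, mul1r, mulr1, addr0, add0r, subr0, sub0r, addrK, subrK, opprK, subrr, oppr0).

Lemma mulss x y a c : e x * a * (e y * c) = e x * e y * (a * c).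
Proof. by rewrite -mulrA (mulrA a) -sgnC -mulrA mulrA. Qed.

Lemma hE' p q r s : E p q * E r s = e (pp p q && pp r s) * (E r s * E p q)
   + (q == r)%:R * E p s - e (pp p q && pp r s) * ((p == s)%:R * E r q).
Proof.
have := hE p q r s; rewrite /sbr => /eqP; rewrite subr_eq => /eqP ->.
by rewrite addrC addrA.
Qed.

Lemma Rel p q r s : b p q * b r s = e (pp p q && pp r s) * (b r s * b p q)
  + e (pi q) * ((q == r)%:R * b p s)
  - e (pp p q && pp r s) * e (pi p) * ((p == s)%:R * b r q).
Proof.
rewrite !bE mulss hE' !mulrDr !mulrN.
congr (_ + _ - _).
- by sgn_bash.
- case: eqVneq => [<-|_]; last by rewrite !mul0r !mulr0.
  by rewrite !mul1r; sgn_bash.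
- case: eqVneq => [<-|_]; last by rewrite !mul0r !mulr0.
  by rewrite !mul1r; sgn_bash.
Qed.

Local Notation M := (@ord_max (m + n)).
Lemma piM : pi M = true.
Proof. by rewrite /par leq_addr. Qed.

Lemma sgnZ x : e x = ((-1) ^+ x : int)%:~R.
Proof. by case: x; rewrite /sgn ?expr0 ?expr1 ?rmorphN ?rmorph1. Qed.

Ltac zs := eq_bash; rewrite ?eqxx; cleanup; rewrite ?piM ?sgnZ ?mulrzl ?mulrzr -?(@mulrN1z A); rewrite ?(mulrzAl, mulrzAr, mulrA, mul1r, mulr1); rewrite -?mulrzA;
  try (match goal with |- _ = _ *~ _ => idtac | |- _ = ?y => transitivity (y *~ 1); last exact: mulr1z end);
  try (match goal with |- _ *~ _ = _ => idtac | |- ?y = _ => transitivity (y *~ 1); first exact: esym (mulr1z _) end);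
  try (congr (_ *~ _); repeat match goal with |- context [par ?m ?x] => case: (par m x) end; by []); try done.
Lemma natCA x c a : c * (x%:R * a) = x%:R * (c * a) :> A.
Proof. by rewrite mulrA (commr_nat c) -mulrA. Qed.

Lemma ac5 (x y z w : A) : x + w - z + y - w = x + y - z.
Proof. by rewrite (addrAC x w) (addrAC (x - z) w y) addrK addrAC. Qed.

Lemma F k p q r s : b p q * X k r s = e (pp p q && pp r s) * (X k r s * b p q)
  + e (pi q) * ((q == r)%:R * X k p s)
  - e (pp p q && pp r s) * e (pi p) * ((p == s)%:R * X k r q).
Proof.
elim: k r s => [|k IH] r s.
  rewrite !X0; case: (eqVneq r s) => [<-|_].
    by rewrite mulr1 mul1r; eq_bash; sgn_bash; cleanup.
  by eq_bash; sgn_bash; cleanup.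
have pw : forall t, b p q * (b r t * X k t s) =
   e (pp p q && pp r s) * (b r t * X k t s * b p q)
 + e (pp p q && pp r t) * e (pi q) * ((t == q)%:R * (b r t * X k p s))
 - e (pp p q && pp r s) * e (pi p) * ((p == s)%:R * (b r t * X k t q))
 + e (pi q) * ((q == r)%:R * (b p t * X k t s))
 - e (pp p q && pp r t) * e (pi p) * ((t == p)%:R * (b r q * X k t s)).
  move=> t; rewrite mulrA Rel !mulrDl !mulNr -(mulrA (e _) (b r t * _)) -(mulrA (b r t)) IH.
  rewrite !mulrDr !mulrN.
  congr (_ + _ - _ + _ - _); zs.
rewrite XS mulr_sumr (eq_bigr _ (fun t _ => pw t)).
rewrite sumrB big_split sumrB big_split /=.
have h2 : \sum_(i < N) e (pp p q && pp r i) * e (pi q) * ((i == q)%:R * (b r i * X k p s))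
   = e (pp p q && pp r q) * e (pi q) * (b r q * X k p s).
  rewrite -(sum_delta q (fun i => e (pp p q && pp r i) * e (pi q) * (b r i * X k p s))).
  by apply: eq_bigr => i _; rewrite natCA.
have h5 : \sum_(i < N) e (pp p q && pp r i) * e (pi p) * ((i == p)%:R * (b r q * X k i s))
   = e (pp p q && pp r q) * e (pi q) * (b r q * X k p s).
  rewrite (eq_bigr _ (fun i _ => natCA _ _ _)).
  rewrite (sum_delta p (fun i => e (pp p q && pp r i) * e (pi p) * (b r q * X k i s))).
  congr (_ * _); rewrite !sgnZ -!rmorphM; congr (_%:~R).
  by repeat match goal with |- context [par ?m ?x] => case: (par m x) end.
rewrite h2 h5 ac5 -!mulr_sumr -mulr_suml !mxE.
by [].
Qed.

Lemma Ib k p q : b p q * Ihat m E k = Ihat m E k * b p q.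
Proof.
rewrite /Ihat mulr_sumr mulr_suml.
have pw : forall r, b p q * (e (pi r) * X k r r)
   = e (pi r) * X k r r * b p q + (r == q)%:R * X k p r - (r == p)%:R * X k r q.
  move=> r; rewrite mulrA -(sgnC _ (b p q)) -mulrA F !mulrDr !mulrN.
  congr (_ + _ - _); zs.
rewrite (eq_bigr _ (fun r _ => pw r)) sumrB big_split /=.
rewrite (sum_delta q (fun r => X k p r)) (sum_delta p (fun r => X k r q)).
by rewrite addrK.
Qed.

Lemma Icomm k a r s : X a r s * Ihat m E k = Ihat m E k * X a r s.
Proof.
elim: a r s => [|a IH] r s; first by rewrite X0 commr_nat.
rewrite XS mulr_suml mulr_sumr; apply: eq_bigr => t _.
by rewrite -mulrA IH mulrA Ib -mulrA.
Qed.

Definition Sf a c := \sum_(p < N) e (pi p) * (X a p M * X c M p).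

Lemma Srec a c : Sf a.+1 c = Sf a c.+1 + Ihat m E a * tau E c - tau E a * Ihat m E c.
Proof.
have pw : forall p t, e (pi p) * (b p t * (X a t M * X c M p)) =
   e (pi t) * (X a t M * (X c M p * b p t))
 + (t == M)%:R * (e (pi p) * e (pi M) * (X a M M * X c p p))
 - e (pp p t) * (X a t M * X c M t)
 + e (pi p) * e (pi t) * (X a p M * X c M p)
 - (p == M)%:R * (e (pp p t && pp t M) * (X a t t * X c M p)).
  move=> p t; rewrite (mulrA (b p t)) F !mulrDl !mulNr.
  rewrite -(mulrA (e _) (X a t M * b p t)) -(mulrA (X a t M)) F !mulrDr !mulrN.
  congr (_ + _ - _ + _ - _); zs.
rewrite {1}/Sf (eq_bigr (fun p => \sum_t (e (pi p) * (b p t * (X a t M * X c M p))))); last first.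
  by move=> p _; rewrite XS mulr_suml mulr_sumr; apply: eq_bigr => t _; rewrite !mulrA.
under eq_bigr => p _ do rewrite (eq_bigr _ (fun t _ => pw p t)) sumrB big_split sumrB big_split /=.
rewrite sumrB big_split sumrB big_split /=.
have h1 : \sum_(p < N) \sum_(t < N) e (pi t) * (X a t M * (X c M p * b p t)) = Sf a c.+1.
  rewrite exchange_big /Sf; apply: eq_bigr => t _; by rewrite -!mulr_sumr -XSr.
have h4 : \sum_(p < N) \sum_(t < N) (t == M)%:R * (e (pi p) * e (pi M) * (X a M M * X c p p))
    = - (tau E a * Ihat m E c).
  under eq_bigr => p _ do rewrite (sum_delta M (fun t => e (pi p) * e (pi M) * (X a M M * X c p p))).
  rewrite /Ihat /tau mulr_sumr -sumrN; apply: eq_bigr => p _; zs.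
have h25 : \sum_(p < N) \sum_(t < N) e (pp p t) * (X a t M * X c M t)
    = \sum_(p < N) \sum_(t < N) e (pi p) * e (pi t) * (X a p M * X c M p).
  rewrite exchange_big; apply: eq_bigr => p _; apply: eq_bigr => t _; zs.
have h3 : \sum_(p < N) \sum_(t < N) (p == M)%:R * (e (pp p t && pp t M) * (X a t t * X c M p))
    = - (Ihat m E a * tau E c).
  rewrite exchange_big.
  under eq_bigr => t _ do rewrite (sum_delta M (fun p => e (pp p t && pp t M) * (X a t t * X c M p))).
  rewrite /Ihat /tau mulr_suml -sumrN; apply: eq_bigr => t _; zs.
rewrite h1 h4 h25 h3 subrK opprK addrAC.
by [].
Qed.

Lemma lhsE l k : \sum_(p < N) e (pi p) * sbr (pp p M) (pp M p) (X l p M) (X k M p)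
  = Sf l k + tau E (l + k).
Proof.
rewrite /sbr; under eq_bigr do rewrite mulrBr.
rewrite sumrB -(opprK (tau E (l + k))); congr (_ - _).
rewrite /tau (addnC l k) Xadd mxE -sumrN; apply: eq_bigr => p _; zs.
Qed.

Lemma main l : forall k, Sf l k + tau E (l + k)
  = \sum_(i < l) (Ihat m E i * tau E (l + k - 1 - i) - Ihat m E (l + k - 1 - i) * tau E i).
Proof.
elim: l => [|l IH] k.
  rewrite big_ord0 /Sf add0n; under eq_bigr => p _ do rewrite X0 natCA.
  rewrite (sum_delta M (fun p => e (pi p) * X k M p)) piM /sgn expr1 mulN1r.
  by rewrite addNr.
rewrite Srec big_ord_recr /= addSnnS -IH.
have -> : (l + k.+1 - 1 - l = k)%N by rewrite addnS subn1 /= addKn.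
rewrite /tau Icomm.
by rewrite -(addrA (Sf l k.+1)) addrAC.
Qed.
End S.

Theorem proposition12 (A : ringType) (m n : nat)
    (E : 'I_(m + n).+1 -> 'I_(m + n).+1 -> A)
    (hE : gl_super_rel E) (l k : nat) :
  \sum_(p < (m + n).+1)
     sgn A (par m p) *
     sbr (par m p (+) par m (@ord_max (m + n))) (par m (@ord_max (m + n)) (+) par m p)
         (Bpow m E l p ord_max) (Bpow m E k ord_max p)
  = \sum_(i < l)
      (Ihat m E i * tau E (l + k - 1 - i) - Ihat m E (l + k - 1 - i) * tau E i).
Proof.
by rewrite lhsE main.
Qed.
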